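(* Let $R$ be a domain and $x$ a nonzero nonunit element of $R^+$. (i) If $R$ has characteristic zero, then the ideal $(x^\infty)R^+$ has a free resolution of length (at most) one by countably generated free $R^+$-modules; in particular $\mathrm{pd}_{R^+}((x^\infty)R^+)\le 1$. If moreover $R$ is Noetherian, local and Henselian, then $\mathrm{pd}_{R^+}((x^\infty)R^+)=1$. (ii) If $R$ has prime characteristic $p$, then $(x^\infty)R^+$ has a free resolution of length (at most) one by countably generated free $R^+$-modules; if moreover $R$ is Noetherian, local and Henselian, then $\mathrm{pd}_{R^+}((x^\infty)R^+)=1$.
   Context: $R^+$ denotes the integral closure of the domain $R$ in an algebraic closure of its field of fractions. If $\mathrm{char}\,R=0$, $(x^\infty)R^+$ denotes the ideal $(x^{1/n}: n\in\mathbb{N})R^+$, where $x^{1/n}\in R^+$ is a compatible system of roots (i.e. $(x^{1/nm})^m=x^{1/n}$). If $\mathrm{char}\,R=p>0$, $(x^\infty)R^+$ denotes $(x^{1/p^n}: n\ge 0)R^+$ with $x^{1/p^n}$ the unique $p^n$-th root. *)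

(* Defs.v *)
From HB Require Import structures.
From mathcomp Require Import all_boot all_order all_algebra.
Set Implicit Arguments. Unset Strict Implicit. Unset Printing Implicit Defensive.
Import Order.TTheory GRing.Theory Num.Theory.
Local Open Scope ring_scope.

Definition is_ideal (A : comRingType) (J : A -> Prop) : Prop :=
  [/\ J 0, (forall a b, J a -> J b -> J (a + b)) & (forall c a, J a -> J (c * a))].

Definition noetherian (A : comRingType) : Prop :=
  forall J : nat -> A -> Prop, (forall n, is_ideal (J n)) ->
    (forall n a, J n a -> J n.+1 a) ->
    exists n, forall m a, (n <= m)%N -> J m a -> J n a.

(* Local ring: the non-units form an ideal (A is nontrivial as a unit ring). *)
Definition local_ring (A : comUnitRingType) : Prop :=
  forall a b : A, a \notin GRing.unit -> b \notin GRing.unit ->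
    (a + b) \notin GRing.unit.

(* Henselian local ring (Stacks 04GE): local, and every simple root modulo the
   maximal ideal m (= non-units) of a monic polynomial lifts to a root. *)
Definition henselian_local (A : comUnitRingType) : Prop :=
  local_ring A /\
  forall (g : {poly A}) (a : A), g \is monic -> g.[a] \notin GRing.unit ->
    (g^`()).[a] \is a GRing.unit ->
    exists b, root g b /\ (b - a) \notin GRing.unit.

Definition char_zero (A : nzRingType) : Prop := forall n : nat, (0 < n)%N -> n%:R != 0 :> A.
Definition char_p (A : nzRingType) (p : nat) : Prop := prime p /\ p%:R = 0 :> A.

(* These properties characterise R^+ up to R-isomorphism. *)
Definition is_abs_integral_closure (R S : idomainType) (f : {rmorphism R -> S}) : Prop :=
  [/\ injective f,
      (forall s : S, exists p : {poly R}, p \is monic /\ root (map_poly f p) s)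
    & (forall q : {poly S}, q \is monic -> (1 < size q)%N -> exists s, root q s)].

(* Compatible systems of roots: char 0, r n = x^{1/n} (n >= 1). *)
Definition compat_roots0 (S : idomainType) (x : S) (r : nat -> S) : Prop :=
  r 1%N = x /\ forall n m : nat, (0 < n)%N -> (0 < m)%N -> r (n * m)%N ^+ m = r n.

(* char p: r n = x^{1/p^n}. *)
Definition compat_rootsp (S : idomainType) (p : nat) (x : S) (r : nat -> S) : Prop :=
  r 0%N = x /\ forall n : nat, r n.+1 ^+ p = r n.

(* (x^infty) S in char 0: ideal generated by the r n, n >= 1. *)
Definition xinf_ideal0 (S : idomainType) (r : nat -> S) (a : S) : Prop :=
  exists (k : nat) (c : nat -> S), a = \sum_(i < k) c i * r i.+1.

(* (x^infty) S in char p: ideal generated by the r n, n >= 0. *)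
Definition xinf_idealp (S : idomainType) (r : nat -> S) (a : S) : Prop :=
  exists (k : nat) (c : nat -> S), a = \sum_(i < k) c i * r i.

(* The countably generated free S-module S^(N) is modelled by {poly S}
   (free with basis 'X^i, i in N). *)
Definition lin_free (S : comRingType) (h : {poly S} -> {poly S}) : Prop :=
  forall (c : S) (u v : {poly S}), h (c *: u + v) = c *: h u + h v.
Definition lin_to_ring (S : comRingType) (h : {poly S} -> S) : Prop :=
  forall (c : S) (u v : {poly S}), h (c *: u + v) = c * h u + h v.

Definition free_res_len_le1 (S : comRingType) (I : S -> Prop) : Prop :=
  exists (d1 : {poly S} -> {poly S}) (d0 : {poly S} -> S),
    [/\ lin_free d1, lin_to_ring d0, injective d1,
        (forall s, I s <-> exists u, d0 u = s)
      & (forall u, d0 u = 0 <-> exists v, d1 v = u)].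

Definition lin_on (S : comRingType) (I : S -> Prop) (N : lmodType S) (g : S -> N) : Prop :=
  forall c a b, I a -> I b -> g (c * a + b) = c *: g a + g b.

Definition projective_ideal (S : comRingType) (I : S -> Prop) : Prop :=
  forall (M N : lmodType S) (pi : M -> N),
    (forall (c : S) u v, pi (c *: u + v) = c *: pi u + pi v) ->
    (forall n, exists m, pi m = n) ->
    forall g : S -> N, lin_on I g ->
    exists h : S -> M, lin_on I h /\ forall a, I a -> pi (h a) = g a.

(* Main.v *)
Require Import Defs.
From HB Require Import structures.
From mathcomp Require Import all_boot all_order all_algebra.
From Stdlib Require Import ClassicalEpsilon.
Set Implicit Arguments. Unset Strict Implicit. Unset Printing Implicit Defensive.
Import GRing.Theory.
Local Open Scope ring_scope.

Definition span (S : idomainType) (g : nat -> S) (a : S) : Prop :=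
  exists (k : nat) (c : nat -> S), a = \sum_(i < k) c i * g i.

Lemma sum_widen (S : idomainType) (g c : nat -> S) k K : (k <= K)%N ->
  \sum_(i < k) c i * g i = \sum_(i < K) (if (i < k)%N then c i else 0) * g i.
Proof.
move=> kK; rewrite -(subnKC kK) big_split_ord /= [X in _ = _ + X]big1 ?addr0.
  by apply: eq_bigr => i _; rewrite ltn_ord.
by move=> i _; rewrite ltnNge leq_addr /= mul0r.
Qed.

Lemma span0 (S : idomainType) (g : nat -> S) : span g 0.
Proof. by exists 0%N, (fun _ => 0); rewrite big_ord0. Qed.

Lemma spanD (S : idomainType) (g : nat -> S) a b : span g a -> span g b -> span g (a + b).
Proof.
move=> [k [c ->]] [l [d ->]].
exists (maxn k l), (fun i => (if (i < k)%N then c i else 0) + (if (i < l)%N then d i else 0)).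
rewrite (sum_widen _ _ (leq_maxl k l)) (sum_widen _ _ (leq_maxr k l)) -big_split /=.
by apply: eq_bigr => i _; rewrite mulrDl.
Qed.

Lemma spanM (S : idomainType) (g : nat -> S) a b : span g b -> span g (a * b).
Proof.
move=> [k [c ->]]; exists k, (fun i => a * c i); rewrite mulr_sumr.
by apply: eq_bigr => i _; rewrite mulrA.
Qed.

Lemma spanN (S : idomainType) (g : nat -> S) b : span g b -> span g (- b).
Proof. by move=> h; rewrite -mulN1r; apply: spanM. Qed.

Lemma span_gen (S : idomainType) (g : nat -> S) n : span g (g n).
Proof.
exists n.+1, (fun i => if i == n then 1 else 0).
rewrite big_ord_recr /= eqxx mul1r big1 ?add0r // => i _.
by rewrite (ltn_eqF (ltn_ord i)) mul0r.
Qed.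

Lemma span_sub (S : idomainType) (g h : nat -> S) :
  (forall n, span h (g n)) -> forall a, span g a -> span h a.
Proof.
move=> H a [k [c ->]]; elim: k => [|k IH]; first by rewrite big_ord0; apply: span0.
by rewrite big_ord_recr /=; apply: spanD => //; apply: spanM.
Qed.

Definition spanb (S : idomainType) (g : nat -> S) (a : S) : bool :=
  if excluded_middle_informative (span g a) then true else false.

Lemma spanbE (S : idomainType) (g : nat -> S) a : spanb g a <-> span g a.
Proof. by rewrite /spanb; case: excluded_middle_informative. Qed.

Definition Sp (S : idomainType) (g : nat -> S) := {a : S | spanb g a}.

Section Foo. End Foo.

Definition sp0 (S : idomainType) (g : nat -> S) : Sp g :=
  exist _ 0 (proj2 (spanbE g 0) (span0 g)).
Definition spadd (S : idomainType) (g : nat -> S) (a b : Sp g) : Sp g :=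
  exist _ (sval a + sval b) (proj2 (spanbE g _) (spanD (proj1 (spanbE g _) (svalP a)) (proj1 (spanbE g _) (svalP b)))).
Definition spopp (S : idomainType) (g : nat -> S) (a : Sp g) : Sp g :=
  exist _ (- sval a) (proj2 (spanbE g _) (spanN (proj1 (spanbE g _) (svalP a)))).
Definition spscale (S : idomainType) (g : nat -> S) (c : S) (a : Sp g) : Sp g :=
  exist _ (c * sval a) (proj2 (spanbE g _) (spanM c (proj1 (spanbE g _) (svalP a)))).

Lemma sp_inj (S : idomainType) (g : nat -> S) (a b : Sp g) : sval a = sval b -> a = b.
Proof. by move=> h; apply: val_inj. Qed.

Section Inst.
Variables (S : idomainType) (g : nat -> S).
Lemma spaddA : associative (@spadd S g). Proof. by move=> a b c; apply: sp_inj; rewrite /= addrA. Qed.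
Lemma spaddC : commutative (@spadd S g). Proof. by move=> a b; apply: sp_inj; rewrite /= addrC. Qed.
Lemma spadd0 : left_id (sp0 g) (@spadd S g). Proof. by move=> a; apply: sp_inj; rewrite /= add0r. Qed.
Lemma spaddN : left_inverse (sp0 g) (@spopp S g) (@spadd S g). Proof. by move=> a; apply: sp_inj; rewrite /= addNr. Qed.
HB.instance Definition _ := Choice.copy (Sp g) {a : S | spanb g a}.
HB.instance Definition _ := GRing.isZmodule.Build (Sp g) spaddA spaddC spadd0 spaddN.
Lemma spsA a b v : spscale a (spscale b v) = @spscale S g (a * b) v.
Proof. by apply: sp_inj; rewrite /= mulrA. Qed.
Lemma sps1 : left_id 1 (@spscale S g). Proof. by move=> a; apply: sp_inj; rewrite /= mul1r. Qed.
Lemma spsDr : right_distributive (@spscale S g) +%R. Proof. by move=> a u v; apply: sp_inj; rewrite /= mulrDr. Qed.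
Lemma spsDl v : {morph (@spscale S g)^~ v: a b / a + b}. Proof. by move=> a b; apply: sp_inj; rewrite /= mulrDl. Qed.
HB.instance Definition _ := GRing.Zmodule_isLmodule.Build S (Sp g) spsA sps1 spsDr spsDl.
End Inst.


Definition d0 (S : idomainType) (g : nat -> S) (u : {poly S}) : S :=
  \sum_(i < size u) u`_i * g i.

Lemma d0_widen (S : idomainType) (g : nat -> S) (u : {poly S}) K :
  (size u <= K)%N -> d0 g u = \sum_(i < K) u`_i * g i.
Proof.
move=> hK; rewrite /d0 (sum_widen _ _ hK); apply: eq_bigr => i _.
by case: ifP => // /negbT; rewrite -leqNgt => h; rewrite nth_default.
Qed.

Lemma d0_lin (S : idomainType) (g : nat -> S) c u v :
  d0 g (c *: u + v) = c * d0 g u + d0 g v.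
Proof.
set K := maxn (size u) (size v).
have hu : (size u <= K)%N by rewrite leq_maxl.
have hv : (size v <= K)%N by rewrite leq_maxr.
have hw : (size (c *: u + v)%R <= K)%N.
  apply: leq_trans (size_polyD _ _) _; rewrite geq_max hv andbT.
  exact: leq_trans (size_scale_leq _ _) hu.
rewrite (d0_widen _ hu) (d0_widen _ hv) (d0_widen _ hw) mulr_sumr -big_split /=.
by apply: eq_bigr => i _; rewrite coefD coefZ mulrDl mulrA.
Qed.

Lemma d0_span (S : idomainType) (g : nat -> S) u : span g (d0 g u).
Proof. by exists (size u), (fun i => u`_i). Qed.

Lemma span_d0 (S : idomainType) (g : nat -> S) a : span g a -> exists u, d0 g u = a.
Proof.
move=> [k [c ->]]; exists (\poly_(i < k) c i).
rewrite (d0_widen _ (size_poly _ _)); apply: eq_bigr => i _.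
by rewrite coef_poly ltn_ord.
Qed.

Lemma sum_sq (S : idomainType) (F : nat -> S) (b : S) k :
  (forall i, (i < k)%N -> exists z, F i = b ^+ 2 * z) ->
  exists z, \sum_(i < k) F i = b ^+ 2 * z.
Proof.
elim: k => [|k IH] H; first by exists 0; rewrite big_ord0 mulr0.
have [z1 h1] := IH (fun i hi => H i (ltnW hi)).
have [z2 h2] := H k (ltnSn k).
by exists (z1 + z2); rewrite big_ord_recr /= h1 h2 mulrDr.
Qed.

Lemma notproj (S : idomainType) (g : nat -> S) (x : S) (hx0 : x != 0)
  (hxu : x \notin GRing.unit) (hxI : span g x)
  (H : forall D : nat, exists b, [/\ span g b, b != 0, (b \is a GRing.unit -> x \is a GRing.unit)
        & forall i, (i < D)%N -> exists z, g i = b ^+ 2 * z]) :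
  ~ projective_ideal (span g).
Proof.
move=> P.
pose pi : {poly S} -> Sp g := fun u => exist _ (d0 g u) (proj2 (spanbE g _) (d0_span g u)).
pose gg : S -> Sp g := fun a => match excluded_middle_informative (span g a) with
   | left h => exist _ a (proj2 (spanbE g a) h) | right _ => 0 end.
have ggE : forall a, span g a -> sval (gg a) = a.
  by move=> a ha; rewrite /gg; case: excluded_middle_informative.
have := P _ _ pi _ _ gg.
case.
- by move=> c u v; apply: sp_inj; rewrite /= d0_lin.
- move=> n; have [u hu] := span_d0 (proj1 (spanbE g _) (svalP n)).
  by exists u; apply: sp_inj; rewrite /= hu.
- move=> c a b ha hb; apply: sp_inj; rewrite /= !ggE //.
  by apply: spanD => //; apply: spanM.
move=> h [hlin hpi].
have hd0 : forall a, span g a -> d0 g (h a) = a.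
  by move=> a ha; have := congr1 sval (hpi a ha); rewrite /= ggE.
have h0 : h 0 = 0.
  have := hlin 1 0 0 (span0 g) (span0 g); rewrite mul1r addr0 scale1r.
  by move=> e; apply: (addrI (h 0)); rewrite addr0 -e.
have hsc : forall c a, span g a -> h (c * a) = c *: h a.
  by move=> c a ha; have := hlin c a 0 ha (span0 g); rewrite !addr0 h0 addr0.
set m := h x.
have [b [hbI hb0 hbu hg]] := H (size m).
set y := h b.
have hxy : x *: y = b *: m by rewrite -!hsc // mulrC.
have hy : forall i, (size m <= i)%N -> y`_i = 0.
  move=> i hi; have := congr1 (fun p : {poly S} => p`_i) hxy.
  rewrite /= !coefZ (nth_default _ hi) mulr0 => /eqP.
  by rewrite mulf_eq0 (negbTE hx0) => /eqP.
have [z hz] : exists z, b = b ^+ 2 * z.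
  suff [z hz] : exists z, d0 g y = b ^+ 2 * z by exists z; rewrite -{1}(hd0 b hbI).
  apply: (@sum_sq S (fun i => y`_i * g i)) => i _.
  case: (ltnP i (size m)) => hi.
    by have [z hz] := hg i hi; exists (y`_i * z); rewrite hz mulrCA.
  by exists 0; rewrite hy // mul0r mulr0.
have : b * (1 - b * z) = 0 by rewrite mulrBr mulr1 mulrA -expr2 -hz subrr.
move/eqP; rewrite mulf_eq0 (negbTE hb0) /= subr_eq0 => /eqP h1.
by move/negP: hxu; apply; apply: hbu; apply/unitrPr; exists z.
Qed.

Definition d1 (S : idomainType) (a : nat -> S) (v : {poly S}) : {poly S} :=
  v - 'X * \poly_(i < size v) (a i * v`_i).

Lemma d1coef (S : idomainType) (a : nat -> S) v j :
  (d1 a v)`_j = v`_j - (if j is k.+1 then a k * v`_k else 0).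
Proof.
rewrite /d1 coefB coefXM; case: j => [|k] //=.
rewrite coef_poly; case: ltnP => // hk.
  by rewrite (nth_default _ hk) mulr0.
Qed.

Lemma d1_lin (S : idomainType) (a : nat -> S) c (u v : {poly S}) :
  d1 a (c *: u + v) = c *: d1 a u + d1 a v.
Proof.
apply/polyP => j; rewrite (d1coef a (c *: u + v) j) [RHS]coefD [in RHS]coefZ (d1coef a u j) (d1coef a v j) !coefD !coefZ.
case: j => [|k]; first by rewrite !subr0.
by rewrite coefD coefZ mulrBr mulrDr !mulrA [a k * c]mulrC opprD addrACA.
Qed.

Lemma d1_inj (S : idomainType) (a : nat -> S) : injective (d1 a).
Proof.
move=> u v e.
have h0 : d1 a (u - v) = 0.
  have := d1_lin a (-1) v u; rewrite scaleN1r addrC => ->.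
  by rewrite e scaleN1r addNr.
apply/eqP; rewrite -subr_eq0; apply/eqP/polyP => j; rewrite coef0.
elim: j => [|k IH].
  by have := congr1 (fun p : {poly S} => p`_0) h0; rewrite /= d1coef coef0 subr0.
have := congr1 (fun p : {poly S} => p`_k.+1) h0.
by rewrite /= d1coef coef0 IH mulr0 subr0.
Qed.

Lemma d0d1 (S : idomainType) (t a : nat -> S) (ht : forall n, t n = a n * t n.+1) v :
  d0 t (d1 a v) = 0.
Proof.
set N := maxn (size v) (size (d1 a v)).
have hN : (size (d1 a v) <= N.+1)%N by apply: leqW; rewrite leq_maxr.
rewrite (d0_widen _ hN).
under eq_bigr => i _ do rewrite d1coef mulrBl.
rewrite sumrB big_ord_recr big_ord_recl /= (nth_default _ (leq_maxl _ _)) mul0r addr0 mul0r add0r.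
apply/eqP; rewrite subr_eq0; apply/eqP; apply: eq_bigr => i _.
by rewrite /bump leq0n add1n add0n [a i * _]mulrC -mulrA -ht.
Qed.

Fixpoint VV (S : idomainType) (a : nat -> S) (u : {poly S}) (k : nat) : S :=
  match k with 0 => u`_0 | k'.+1 => u`_k'.+1 + a k' * VV a u k' end.

Lemma VV_sum (S : idomainType) (t a : nat -> S) (ht : forall n, t n = a n * t n.+1) (u : {poly S}) k :
  \sum_(i < k.+1) u`_i * t i = VV a u k * t k.
Proof.
elim: k => [|k IH]; first by rewrite big_ord_recr big_ord0 /= add0r.
by rewrite big_ord_recr /= IH ht mulrA mulrDl addrC (mulrC _ (a k)).
Qed.

Lemma res_lemma (S : idomainType) (t a : nat -> S) (ht : forall n, t n = a n * t n.+1)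
  (ht0 : forall n, t n != 0) : free_res_len_le1 (span t).
Proof.
exists (d1 a), (d0 t); split.
- by move=> c u v; apply: d1_lin.
- by move=> c u v; apply: d0_lin.
- exact: d1_inj.
- by move=> s; split; [apply: span_d0 | case=> u <-; apply: d0_span].
move=> u; split; last by case=> v <-; apply: d0d1.
move=> hu.
case E: (size u) => [|n].
  by exists 0; move/eqP: E; rewrite size_poly_eq0 => /eqP ->; apply/polyP => j; rewrite d1coef coef0; case: j => [|j]; rewrite ?coef0 ?mulr0 subr0 ?coef0.
have hV : VV a u n = 0.
  have := VV_sum ht u n; rewrite -E -/(d0 t u) hu => /esym/eqP.
  by rewrite mulf_eq0 (negbTE (ht0 n)) orbF => /eqP.
exists (\poly_(i < n.+1) VV a u i).
apply/polyP => j; rewrite d1coef !coef_poly.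
case: j => [|k] /=; first by rewrite subr0.
case: ltnP => hk.
  by rewrite coef_poly (ltn_trans (ltnSn k) hk) addrK.
rewrite sub0r (nth_default _ (leq_trans (eq_leq E) hk)).
rewrite coef_poly; case: ltnP => hk2; last by rewrite mulr0 oppr0.
have -> : k = n by apply/eqP; rewrite eqn_leq -ltnS hk2 -ltnS hk.
by rewrite hV mulr0 oppr0.
Qed.

Lemma free_res_ext (S : idomainType) (I J : S -> Prop) :
  (forall s, I s <-> J s) -> free_res_len_le1 I -> free_res_len_le1 J.
Proof.
move=> e [d1' [d0' [h1 h2 h3 h4 h5]]]; exists d1', d0'; split => // s.
by rewrite -e.
Qed.

Lemma sq_factor (S : idomainType) (b : S) m : (2 <= m)%N -> exists z, b ^+ m = b ^+ 2 * z.
Proof. by move=> hm; exists (b ^+ (m - 2)); rewrite -exprD subnKC. Qed.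


Lemma part0 (S : idomainType) (x : S) (hx0 : x != 0) (hxu : x \notin GRing.unit)
  (r : nat -> S) (hr : compat_roots0 x r) :
  free_res_len_le1 (xinf_ideal0 r) /\ ~ projective_ideal (xinf_ideal0 r).
Proof.
case: hr => hr1 hr.
pose g := fun i => r i.+1.
have hxpow : forall n, (0 < n)%N -> x = r n ^+ n.
  by move=> n hn; rewrite -hr1 -{1}(mul1n n) hr.
have hrn0 : forall n, (0 < n)%N -> r n != 0.
  move=> n hn; apply/negP => /eqP h0; move/negP: hx0; apply.
  rewrite (hxpow n hn) h0 expr0n; by case: n hn h0.
have hIg : forall s, xinf_ideal0 r s <-> span g s by [].
split.
  pose t := fun n => r (2 ^ n)%N.
  have ht : forall n, t n = t n.+1 * t n.+1.
    by move=> n; rewrite /t expnSr -expr2 hr // expn_gt0.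
  apply: (free_res_ext (I := span t)).
    move=> s; rewrite hIg; split; apply: span_sub => n.
    - rewrite /t -(prednK (expn_gt0 2 n)) ; exact: (span_gen g (2 ^ n).-1).
    - rewrite /g; set w := r ((n.+1) * 2 ^ n)%N.
      have e1 : r n.+1 = w ^+ (2 ^ n) by rewrite /w hr // expn_gt0.
      have e2 : t n = w ^+ n.+1 by rewrite /w mulnC hr // expn_gt0.
      have hle : (n.+1 <= 2 ^ n)%N by apply: ltn_expl.
      rewrite e1 -(subnKC hle) exprD -e2 mulrC; apply: spanM; exact: span_gen.
  apply: (res_lemma ht) => n; apply: hrn0; exact: expn_gt0.
apply: (@notproj S g x hx0 hxu).
  by rewrite -hr1; exact: (span_gen g 0).
move=> D; set N := (2 * D`!)%N.
have hN : (0 < N)%N by rewrite muln_gt0 fact_gt0.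
exists (r N); split.
- rewrite -(prednK hN); exact: (span_gen g N.-1).
- exact: hrn0.
- by move=> hu; rewrite (hxpow N hN) unitrX.
move=> i hi.
have hd : (i.+1 %| D`!)%N by apply: dvdn_fact.
set m := (2 * (D`! %/ i.+1))%N.
have hm : (i.+1 * m)%N = N by rewrite /m mulnCA [(i.+1 * _)%N]mulnC divnK.
have hm2 : (2 <= m)%N.
  by rewrite /m leq_pmulr // divn_gt0 // dvdn_leq // fact_gt0.
rewrite /g -(hr i.+1 m) // ?hm; first exact: sq_factor.
by apply: leq_trans hm2.
Qed.

Lemma partp (S : idomainType) (x : S) (hx0 : x != 0) (hxu : x \notin GRing.unit)
  (p : nat) (hp : prime p) (r : nat -> S) (hr : compat_rootsp p x r) :
  free_res_len_le1 (xinf_idealp r) /\ ~ projective_ideal (xinf_idealp r).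
Proof.
case: hr => hr0 hr.
have hrk : forall n k, r n = r (n + k)%N ^+ (p ^ k).
  move=> n; elim=> [|k IH]; first by rewrite addn0 expn0 expr1.
  by rewrite IH -(hr (n + k)%N) -exprM expnS mulnC addnS.
have hxpow : forall n, x = r n ^+ (p ^ n) by move=> n; rewrite -hr0 (hrk 0%N n).
have hrn0 : forall n, r n != 0.
  move=> n; apply/negP => /eqP h0; move/negP: hx0; apply.
  by rewrite (hxpow n) h0 expr0n expn_eq0 (gtn_eqF (prime_gt0 hp)) /= eqxx.
have hp2 : (2 <= p)%N by apply: prime_gt1.
split.
  apply: (free_res_ext (I := span r)); first by move=> s; split.
  apply: (@res_lemma S r (fun n => r n.+1 ^+ p.-1)) => n; last exact: hrn0.
  by rewrite -exprSr prednK ?prime_gt0 // hr.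
apply: (@notproj S r x hx0 hxu).
  rewrite -hr0; exact: (span_gen r 0).
move=> D; exists (r D); split.
- exact: span_gen.
- exact: hrn0.
- move=> hu; rewrite (hxpow D); exact: unitrX.
move=> i hi.
have e : (i + (D - i))%N = D by rewrite subnKC // ltnW.
have h2 : (2 <= p ^ (D - i))%N.
  apply: leq_trans hp2 _; rewrite -{1}(expn1 p); apply: leq_pexp2l; first exact: prime_gt0.
  by rewrite subn_gt0.
have := hrk i (D - i)%N; rewrite e => ->.
exact: sq_factor.
Qed.
Theorem lemma4p2 (R S : idomainType) (f : {rmorphism R -> S})
  (hS : is_abs_integral_closure f) (x : S)
  (hx0 : x != 0) (hxu : x \notin GRing.unit) :
  (char_zero R ->
     forall r : nat -> S, compat_roots0 x r ->
       free_res_len_le1 (xinf_ideal0 r) /\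
       (noetherian R -> henselian_local R -> ~ projective_ideal (xinf_ideal0 r)))
  /\
  (forall p : nat, char_p R p ->
     forall r : nat -> S, compat_rootsp p x r ->
       free_res_len_le1 (xinf_idealp r) /\
       (noetherian R -> henselian_local R -> ~ projective_ideal (xinf_idealp r))).
Proof.
split.
  move=> _ r hr; have [h1 h2] := part0 hx0 hxu hr; split => //.
move=> p [hp _] r hr; have [h1 h2] := partp hx0 hxu hp hr; split => //.
Qed.
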